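(* Let $d=s_c+s_e+s_3$ and $$A=\begin{bmatrix}A_1&A_{12}&0\\0&A_2&0\\0&A_{32}&A_3\end{bmatrix},\quad B=\begin{bmatrix}B_1\\0\\0\end{bmatrix},\quad I_1=\begin{bmatrix}I_{s_c}&0&0\\0&0&0\\0&0&0\end{bmatrix},$$ with $A_1\in\mathbb{R}^{s_c\times s_c}$, $A_2\in\mathbb{R}^{s_e\times s_e}$, $A_3\in\mathbb{R}^{s_3\times s_3}$, $B_1\in\mathbb{R}^{s_c\times d_u}$. Let $K=[K_1\ K_2\ 0]\in\mathbb{R}^{d_u\times d}$ (zero on the third block) with $\rho(A+BK)<1$, and let $P_K=\sum_{t\ge0}\big((A+BK)^t\big)^\top(I_1+K^\top K)(A+BK)^t$. Then $$P_K=\begin{bmatrix}P_1&P_{12}&0\\P_{12}^\top&P_2&0\\0&0&0\end{bmatrix}$$ for some matrices $P_1,P_{12},P_2$, i.e. the third block row and column of $P_K$ vanish.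
   Context: $\rho$ denotes the spectral radius. *)

(* Defs.v *)
From HB Require Import structures.
From mathcomp Require Import all_boot all_order all_algebra.
From mathcomp Require Import all_classical all_reals all_analysis.
From mathcomp Require Import complex.
Set Implicit Arguments. Unset Strict Implicit. Unset Printing Implicit Defensive.
Import Order.TTheory GRing.Theory Num.Theory.
Local Open Scope ring_scope.

Definition spectral_radius_lt1 (R : realType) (n : nat) (M : 'M[R]_n) : Prop :=
  forall z : R[i], eigenvalue (map_mx (fun x : R => (x%:C)%C) M) z -> `|z| < 1.

Definition PK (R : realType) (n : nat) (M Q : 'M[R]_n) : 'M[R]_n :=
  \matrix_(i, j) limn (fun N : nat =>
      (\sum_(t < N) ((M ^+ t)^T *m Q *m M ^+ t)) i j).

(* Main.v *)
Require Import Defs.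
From HB Require Import structures.
From mathcomp Require Import all_boot all_order all_algebra.
From mathcomp Require Import all_classical all_reals all_analysis.
From mathcomp Require Import complex.
Import Order.TTheory GRing.Theory Num.Theory.
Local Open Scope ring_scope.

Lemma pow_lowtri (R : realType) (m n : nat) (T : 'M[R]_m) (L : 'M[R]_(n, m))
  (D : 'M[R]_n) (t : nat) :
  exists X Y Z, (block_mx T 0 L D) ^+ t = block_mx X 0 Y Z.
Proof.
elim: t => [|t [X [Y [Z IH]]]].
  by exists 1%:M, 0, 1%:M; rewrite expr0 -scalar_mx_block.
exists (X *m T), (Y *m T + Z *m L), (Z *m D).
by rewrite exprSr IH -mulmxE mulmx_block !mulmx0 !mul0mx !addr0 add0r.
Qed.

Lemma term_shape (R : realType) (m n : nat) (T : 'M[R]_m) (L : 'M[R]_(n, m))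
  (D : 'M[R]_n) (Q : 'M[R]_m) (t : nat) : Q^T = Q ->
  exists F : 'M[R]_m, F^T = F /\
   ((block_mx T 0 L D) ^+ t)^T *m block_mx Q 0 0 0 *m (block_mx T 0 L D) ^+ t
   = block_mx F 0 0 0.
Proof.
move=> hQ; have [X [Y [Z ->]]] := @pow_lowtri _ _ _ T L D t.
exists (X^T *m Q *m X); split.
  by rewrite !trmx_mul trmxK hQ mulmxA.
rewrite tr_block_mx !mulmx_block !trmx0 ?mulmx0 ?mul0mx ?addr0 ?add0r.
by rewrite !mul0mx !addr0.
Qed.

Lemma sum_shape (R : realType) (m n : nat) (G : nat -> 'M[R]_(m + n))
  (H : forall t, exists F : 'M[R]_m, F^T = F /\ G t = block_mx F 0 0 0) (N : nat) :
  exists F : 'M[R]_m, F^T = F /\ \sum_(t < N) G t = block_mx F 0 0 0.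
Proof.
elim: N => [|N [F [hF IH]]].
  by exists 0; rewrite big_ord0 trmx0 block_mx0.
have [F' [hF' HG]] := H N.
exists (F + F'); rewrite big_ord_recr /= IH HG add_block_mx !addr0 linearD /= hF hF'.
by [].
Qed.

Theorem lemma3 (R : realType) (sc se s3 du : nat)
  (A1 : 'M[R]_sc) (A12 : 'M[R]_(sc, se)) (A2 : 'M[R]_se)
  (A32 : 'M[R]_(s3, se)) (A3 : 'M[R]_s3) (B1 : 'M[R]_(sc, du))
  (K1 : 'M[R]_(du, sc)) (K2 : 'M[R]_(du, se)) :
  let A : 'M[R]_(sc + se + s3) :=
    block_mx (block_mx A1 A12 0 A2) 0 (row_mx 0 A32) A3 in
  let B : 'M[R]_(sc + se + s3, du) := col_mx (col_mx B1 0) 0 in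
  let I1 : 'M[R]_(sc + se + s3) :=
    block_mx (block_mx (1%:M : 'M[R]_sc) 0 0 0) 0 0 0 in
  let K : 'M[R]_(du, sc + se + s3) := row_mx (row_mx K1 K2) 0 in
  spectral_radius_lt1 (A + B *m K) ->
  exists (P1 : 'M[R]_sc) (P12 : 'M[R]_(sc, se)) (P2 : 'M[R]_se),
    PK (A + B *m K) (I1 + K^T *m K) =
      block_mx (block_mx P1 P12 P12^T P2) 0 0 0.
Proof.
move=> A B I1 K _.
set Q' := block_mx (1%:M : 'M[R]_sc) 0 0 0 + (row_mx K1 K2)^T *m row_mx K1 K2.
have hQ' : Q'^T = Q'.
  by rewrite /Q' linearD /= trmx_mul trmxK tr_block_mx !trmx0 trmx1.
have EQ : I1 + K^T *m K = block_mx Q' 0 0 0.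
  rewrite /I1 /K tr_row_mx trmx0 mul_col_row !mulmx0 !mul0mx add_block_mx.
  by rewrite ?addr0 ?add0r.
have EM : A + B *m K = block_mx (block_mx A1 A12 0 A2 +
     col_mx B1 0 *m row_mx K1 K2) 0 (row_mx 0 A32) A3.
  rewrite /A /B /K mul_col_row !mulmx0 !mul0mx add_block_mx !addr0.
  by [].
rewrite EQ EM.
set M := block_mx _ 0 _ A3.
have HS : forall N, exists F : 'M[R]_(sc + se), F^T = F /\
   \sum_(t < N) ((M ^+ t)^T *m block_mx Q' 0 0 0 *m M ^+ t) = block_mx F 0 0 0.
  move=> N; apply: (@sum_shape R (sc+se) s3 (fun t => (M ^+ t)^T *m block_mx Q' 0 0 0 *m M ^+ t)) => t; exact: (@term_shape _ _ _ _ _ _ _ _ hQ').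
pose SF N := projT1 (cid (HS N)).
have hSF N : (SF N)^T = SF N /\
  \sum_(t < N) ((M ^+ t)^T *m block_mx Q' 0 0 0 *m M ^+ t) = block_mx (SF N) 0 0 0.
  exact: (projT2 (cid (HS N))).
have symB N : (block_mx (SF N) 0 0 0 : 'M[R]_(sc+se+s3))^T = block_mx (SF N) 0 0 0.
  by rewrite tr_block_mx !trmx0 (proj1 (hSF N)).
have zr N (i : 'I_s3) (j : 'I_(sc+se+s3)) : (block_mx (SF N) 0 0 0 : 'M[R]_(sc+se+s3)) (rshift (sc+se) i) j = 0.
  case: (split_ordP j) => j' ->;
  by rewrite ?block_mxEul ?block_mxEur ?block_mxEdl ?block_mxEdr ?mxE.
set P := PK M (block_mx Q' 0 0 0).
have F1 : forall i j, P i j = P j i.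
  move=> i j; rewrite /P /PK !mxE.
  under eq_fun => N do rewrite (proj2 (hSF N)).
  under [in RHS]eq_fun => N do rewrite (proj2 (hSF N)).
  under eq_fun => N do rewrite -(symB N) mxE.
  by [].
have F2 : forall i j, P (rshift (sc+se) i) j = 0.
  move=> i j; rewrite /P /PK !mxE.
  under eq_fun => N do rewrite (proj2 (hSF N)) zr.
  by rewrite lim_cst.
clearbody P.
have F3 : forall i j, P i (rshift (sc+se) j) = 0 by move=> i j; rewrite F1 F2.
set U := ulsubmx P.
have hU : U^T = U by apply/matrixP => i j; rewrite !mxE F1.
have -> : P = block_mx U 0 0 0.
  have h1 : ursubmx P = 0 by apply/matrixP => i j; rewrite !mxE F3.
  have h2 : dlsubmx P = 0 by apply/matrixP => i j; rewrite !mxE F2.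
  have h3 : drsubmx P = 0 by apply/matrixP => i j; rewrite !mxE F2.
  by rewrite -[P in LHS]submxK h1 h2 h3.
exists (ulsubmx U), (ursubmx U), (drsubmx U).
by rewrite trmx_ursub hU submxK.
Qed.
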